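(* Let $S(A)=\{a_n\}$ be independent and $S(B)=\{b_n\}$ be regular. Let $k$ be adequate with respect to $S(A)$. Let $A^{\ast}=\{a_0,a_1,\ldots,a_{2^k-1}\}$ and define $$A\otimes_k B=\{a_{2^k}b+a\mid a\in A^{\ast},\ b\in B\}.$$ Then $S(A\otimes_k B)$ is a regular Stanley sequence, which is independent if and only if $S(B)$ is, having description $$S(A\otimes_k B)=\{a_{2^k}b+a\mid a\in A^{\ast},\ b\in S(B)\},$$ with character $\lambda(A\otimes_k B)=a_{2^k}\cdot \lambda(B)+\lambda(A)$ and shift index $\sigma(A\otimes_k B)=2^k\cdot \sigma(B)$.
   Context: A set of nonnegative integers is 3-free if no three elements form an arithmetic progression. For a 3-free set $A=\{a_0<\cdots<a_k\}$ (all sequences assumed to start at $0$), the Stanley sequence $S(A)=\{a_n\}$ is defined greedily: each $a_{n+1}$ is the smallest integer greater than $a_n$ such that $\{a_0,\ldots,a_{n+1}\}$ is 3-free. A Stanley sequence $S(A)=\{a_n\}$ is independent if there is a constant $\lambda$ (its character $\lambda(A)$) such that for all sufficiently large $k$ and all $0\le i<2^k$, $a_{2^k+i}=a_{2^k}+a_i$ and $a_{2^k}=2a_{2^k-1}-\lambda+1$. A Stanley sequence $S(A)=\{a_n\}$ is regular if there exist constants $\lambda,\sigma$ and an independent Stanley sequence $\{a'_n\}$ of character $\lambda$ (the core) such that for all large $k$ and $0\le i<2^k$, $a_{2^k-\sigma+i}=a_{2^k-\sigma}+a'_i$ and $a_{2^k-\sigma}=2a_{2^k-\sigma-1}-\lambda+1$;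 these constants are unique, and $\lambda$ is called the character $\lambda(A)$ and $\sigma$ the shift index $\sigma(A)$. Independent sequences are exactly the regular ones with $\sigma=0$ and core equal to themselves. An integer $k_0$ is adequate for a regular sequence $S(A)$ if (i) the two defining equations hold for all $k\ge k_0$ and (ii) $a_{2^{k_0}-\sigma(A)}$ is not contained in the minimal-cardinality nucleating set of $S(A)$. *)

(* Defs.v *)
From mathcomp Require Import all_boot all_order all_algebra.
Set Implicit Arguments. Unset Strict Implicit. Unset Printing Implicit Defensive.
Import GRing.Theory Num.Theory.

(* A finite set of nonnegative integers is represented by a seq nat (set = its
   elements; order and repetitions irrelevant). *)

Definition three_free (s : seq nat) : bool :=
  all (fun x => all (fun y => all (fun z =>
    ~~ [&& x < y, y < z & x + z == y.*2]) s) s) s.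

Definition stanley_set (A : seq nat) : bool := three_free A && (0 \in A).

(* Greedy step: least m > last p such that p ++ [m] is 3-free
   (2 * last p + 1 always works when p is 3-free). *)
Definition next_term (p : seq nat) : nat :=
  let l := last 0 p in
  find (fun m => (l < m) && three_free (rcons p m)) (iota 0 (l.*2 + 2)).

Fixpoint stanley_prefix (As : seq nat) (n : nat) : seq nat :=
  match n with
  | 0 => [::]
  | n'.+1 => if n <= size As then take n As
             else let p := stanley_prefix As n' in rcons p (next_term p)
  end.

Definition stanley (A : seq nat) (n : nat) : nat :=
  nth 0 (stanley_prefix (sort leq (undup A)) n.+1) n.

Local Open Scope ring_scope.

Definition independent_with (a : nat -> nat) (lam : int) : Prop :=
  exists K : nat, forall k : nat, (K <= k)%N ->
    (forall i : nat, (i < 2 ^ k)%N -> a (2 ^ k + i)%N = (a (2 ^ k) + a i)%N) /\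
    (a (2 ^ k)%N)%:Z = 2 * (a (2 ^ k).-1)%:Z - lam + 1.

Definition independent (a : nat -> nat) : Prop := exists lam, independent_with a lam.

(* index 2^k - sigma (exact as soon as 2^k >= sigma) *)
Definition sidx (k : nat) (sigma : int) : nat := `|(2 ^ k)%N%:Z - sigma|%N.

Definition regular_eqs (a : nat -> nat) (lam sigma : int) (core : nat -> nat)
    (k : nat) : Prop :=
  (forall i : nat, (i < 2 ^ k)%N ->
     a (sidx k sigma + i)%N = (a (sidx k sigma) + core i)%N) /\
  (a (sidx k sigma))%:Z = 2 * (a (sidx k sigma).-1)%:Z - lam + 1.

Definition indep_stanley_core (core : nat -> nat) (lam : int) : Prop :=
  exists C : seq nat, [/\ stanley_set C, core =1 stanley C & independent_with core lam].

Definition regular_with (a : nat -> nat) (lam sigma : int) (core : nat -> nat) : Prop :=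
  indep_stanley_core core lam /\
  exists K : nat, forall k : nat, (K <= k)%N -> regular_eqs a lam sigma core k.

Definition regular (a : nat -> nat) : Prop :=
  exists lam sigma core, regular_with a lam sigma core.

Definition nucleating (A N : seq nat) : Prop :=
  stanley_set N /\ stanley N =1 stanley A.

Definition min_nucleating (A N : seq nat) : Prop :=
  nucleating A N /\ forall N', nucleating A N' -> (size (undup N) <= size (undup N'))%N.

Definition adequate (A : seq nat) (lam sigma : int) (core : nat -> nat) (k0 : nat) : Prop :=
  (forall k : nat, (k0 <= k)%N -> regular_eqs (stanley A) lam sigma core k) /\
  (forall N, min_nucleating A N -> stanley A (sidx k0 sigma) \notin N).

Definition Astar (A : seq nat) (k : nat) : seq nat :=
  [seq stanley A i | i <- iota 0 (2 ^ k)].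

Definition otimes (A : seq nat) (k : nat) (B : seq nat) : seq nat :=
  [seq (stanley A (2 ^ k) * b + x)%N | x <- Astar A k, b <- B].

(* Main.v *)
Require Import Defs.
From mathcomp Require Import all_boot all_order all_algebra.
From mathcomp Require Import zify.
From Stdlib Require Import Classical FunctionalExtensionality.
Import GRing.Theory Num.Theory.

Definition inr (f : nat -> nat) (x : nat) := exists i, f i = x.
Definition rejected (P : nat -> Prop) (m : nat) :=
  exists x y, P x /\ P y /\ x < m /\ x + m = y.*2.
Definition tfP (P : nat -> Prop) := forall x y z, P x -> P y -> P z ->
  x < y -> y < z -> x + z <> y.*2.

Lemma three_freeP s : reflect (tfP (fun x => x \in s)) (three_free s).
Proof.
apply: (iffP idP).
- move=> /allP H x y z xs ys zs xy yz E.
  have /allP := H x xs. move=> /(_ y ys) /allP /(_ z zs).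
  by rewrite xy yz E eqxx.
- move=> H; apply/allP=> x xs; apply/allP=> y ys; apply/allP=> z zs.
  apply/negP=> /and3P [xy yz /eqP E]. exact: H xy yz E.
Qed.

Lemma tf_sub (P : nat -> Prop) s : tfP P -> (forall x, x \in s -> P x) -> three_free s.
Proof.
move=> H hs; apply/three_freeP => x y z hx hy hz; apply: H; exact: hs.
Qed.
Arguments tf_sub {P s}.


Lemma tf_rcons p m : three_free p -> (forall x, x \in p -> x < m) ->
  ~ rejected (fun x => x \in p) m -> three_free (rcons p m).
Proof.
move=> /three_freeP tf hlt nr; apply/three_freeP => x y z.
rewrite !mem_rcons !in_cons => hx hy hz xy yz E.
case/orP: hz => [/eqP ez|hz].
- subst z. case/orP: hy => [/eqP ey|hy]; first lia.
  case/orP: hx => [/eqP ex|hx]; first lia.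
  apply: nr; exists x, y; do !split => //; lia.
- have := hlt _ hz => zm.
  case/orP: hy => [/eqP ey|hy]; first lia.
  case/orP: hx => [/eqP ex|hx]; first lia.
  exact: tf xy yz E.
Qed.
Arguments tf_rcons {p m}.


Lemma rej_rcons p m : three_free p -> (forall x, x \in p -> x < m) ->
  ~~ three_free (rcons p m) -> rejected (fun x => x \in p) m.
Proof.
move=> tf hlt ntf; case: (classic (rejected (fun x => x \in p) m)) => // nr.
by move: ntf; rewrite tf_rcons.
Qed.
Arguments rej_rcons {p m}.


Lemma rej_not_tf p m : rejected (fun x => x \in p) m -> ~~ three_free (rcons p m).
Proof.
move=> [x [y [hx [hy [xm E]]]]]; apply/negP => /three_freeP tf.
apply: (tf x y m); rewrite ?mem_rcons ?in_cons ?hx ?hy ?eqxx ?orbT //; lia.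
Qed.
Arguments rej_not_tf {p m}.


Lemma next_term_spec p : three_free p -> (forall x, x \in p -> x <= last 0 p) ->
  [/\ last 0 p < next_term p, three_free (rcons p (next_term p)) &
     forall m, last 0 p < m < next_term p -> ~~ three_free (rcons p m)].
Proof.
move=> tf hle. rewrite /next_term /=.
set l := last 0 p. set f := fun m => (l < m) && three_free (rcons p m).
have hf : f l.*2.+1.
  rewrite /f; apply/andP; split; first lia.
  apply: tf_rcons => //. move=> x /hle; rewrite -/l; lia.
  move=> [x [y [hx [hy [xm E]]]]]. have := hle _ hy; rewrite -/l. lia.
have hasf : has f (iota 0 (l.*2 + 2)).
  apply/hasP; exists l.*2.+1 => //; rewrite mem_iota; lia.
set i := find f _.
have hi : i < l.*2 + 2 by rewrite -[X in _ < X](size_iota 0) -has_find.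
have := nth_find 0 hasf; rewrite -/i nth_iota // add0n => /andP[h1 h2].
split => // m /andP[lm mi].
have := before_find 0 mi; rewrite nth_iota; last lia.
by rewrite add0n /f lm /= => ->.
Qed.
Arguments next_term_spec {p}.




Lemma size_pref s n : n <= size s -> stanley_prefix s n = take n s.
Proof. case: n => [|n] /= h; first by rewrite take0. by rewrite h. Qed.

Lemma size_pref' s n : size (stanley_prefix s n) = n.
Proof.
elim: n => //= n IH. case: ifP => h; first by rewrite size_takel.
by rewrite size_rcons IH.
Qed.

Lemma pref_take s n m : n <= m -> stanley_prefix s n = take n (stanley_prefix s m).
Proof.
elim: m => [|m IH] hn.
  by move: hn; rewrite leqn0 => /eqP ->.
case: (ltnP m n) => hmn.
  have -> : n = m.+1 by lia.
  by rewrite -[X in take X _](size_pref' s m.+1) take_size.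
rewrite IH //. rewrite [stanley_prefix s m.+1]/=. case: ifP => h.
  rewrite size_pref; last lia. by rewrite !take_takel.
by rewrite -cats1 takel_cat // size_pref'.
Qed.

Notation sset As := (sort leq (undup As)).

Lemma pref_mkseq As n : stanley_prefix (sset As) n = mkseq (stanley As) n.
Proof.
apply: (eq_from_nth (x0:=0)); first by rewrite size_pref' size_mkseq.
move=> i; rewrite size_pref' => hi. rewrite nth_mkseq // /stanley.
by rewrite (@pref_take _ i.+1 n) // nth_take.
Qed.

Lemma stanley_small As i : i < size (sset As) -> stanley As i = nth 0 (sset As) i.
Proof. move=> hi. by rewrite /stanley size_pref // nth_take. Qed.

Lemma stanley_big As n : size (sset As) <= n ->
  stanley As n = next_term (mkseq (stanley As) n).
Proof.
move=> hn. rewrite {1}/stanley /=. have -> : (n < size (sset As)) = false by lia.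
by rewrite nth_rcons size_pref' ltnn eqxx pref_mkseq.
Qed.
Arguments stanley_big {As n}.

Lemma mem_mkseqP (f : nat -> nat) n x : reflect (exists2 i, i < n & f i = x) (x \in mkseq f n).
Proof.
apply: (iffP mapP) => [[i]|[i hi <-]].
  by rewrite mem_iota add0n => /andP[_ hi] ->; exists i.
by exists i; rewrite // mem_iota.
Qed.

Lemma sset_sorted As : sorted ltn (sset As).
Proof.
by rewrite ltn_sorted_uniq_leq sort_uniq undup_uniq sort_sorted //; exact: leq_total.
Qed.

Lemma mem_sset As x : (x \in sset As) = (x \in As).
Proof. by rewrite mem_sort mem_undup. Qed.

Lemma sset_pos As : stanley_set As -> 0 < size (sset As).
Proof.
case/andP=> _ h0. have : 0 \in sset As by rewrite mem_sset.
by case: (sset As).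
Qed.
Arguments sset_pos {As}.


Lemma stanley_inv As : stanley_set As -> forall n,
  three_free (mkseq (stanley As) n) /\
  (forall i j, i < j < n -> stanley As i < stanley As j).
Proof.
move=> hA; have := hA => /andP[tfA _].
have hs := @sset_pos _ hA.
have small : forall n, n <= size (sset As) -> three_free (mkseq (stanley As) n) /\
   (forall i j, i < j < n -> stanley As i < stanley As j).
  move=> n hn; split.
    rewrite -pref_mkseq size_pref //.
    apply: (@tf_sub (fun x => x \in As)); first exact/three_freeP.
    by move=> x /mem_take; rewrite mem_sset.
  move=> i j /andP[ij jn]. rewrite !stanley_small; try lia.
  apply: (sorted_ltn_nth ltn_trans 0 (sset_sorted As)) => //; rewrite inE; lia.
elim=> [|n [tf inc]]; first by split=> // i j; lia.
case: (leqP n.+1 (size (sset As))) => h; first exact: small.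
have hn : size (sset As) <= n by lia.
have n0 : 0 < n by lia.
set p := mkseq (stanley As) n.
have lastp : last 0 p = stanley As n.-1.
  rewrite /p; case: n n0 {tf inc h hn p} => // n _. by rewrite mkseqS last_rcons.
have hle : forall x, x \in p -> x <= last 0 p.
  move=> x /mem_mkseqP [i hi <-]. rewrite lastp.
  case: (ltnP i n.-1) => hi'; last by have -> : i = n.-1 by lia.
  apply: ltnW; apply: inc; lia.
have [h1 h2 h3] := @next_term_spec _ tf hle.
rewrite mkseqS; split; first by rewrite (stanley_big hn).
move=> i j /andP[ij]; rewrite ltnS leq_eqVlt => /orP[/eqP ej|jn]; last by apply: inc; lia.
subst j.
rewrite (stanley_big hn) -/p. apply: leq_ltn_trans h1. rewrite lastp.
case: (ltnP i n.-1) => hi'; last by have -> : i = n.-1 by lia.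
apply: ltnW; apply: inc; lia.
Qed.
Arguments stanley_inv {As}.


Lemma stanley_incr As : stanley_set As -> forall i j, i < j -> stanley As i < stanley As j.
Proof. move=> hA i j ij. have [_ h] := @stanley_inv _ hA j.+1. apply: h; lia. Qed.
Arguments stanley_incr {As}.


Lemma incr_le (f : nat -> nat) : (forall i j, i < j -> f i < f j) -> forall i j, i <= j -> f i <= f j.
Proof. move=> h i j; rewrite leq_eqVlt => /orP[/eqP->//|/h]; lia. Qed.
Arguments incr_le {f} _ {i j}.


Lemma incr_ge (f : nat -> nat) : (forall i j, i < j -> f i < f j) -> forall i, i <= f i.
Proof. move=> h; elim=> // i IH. have := h i i.+1 (ltnSn i); lia. Qed.
Arguments incr_ge {f}.


Lemma incr_lt_inv (f : nat -> nat) : (forall i j, i < j -> f i < f j) -> forall i j, f i < f j -> i < j.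
Proof. move=> h i j fij. case: (ltnP i j) => // ji. have := incr_le h ji; lia. Qed.
Arguments incr_lt_inv {f} _ {i j}.


Lemma incr_inj (f : nat -> nat) : (forall i j, i < j -> f i < f j) -> forall i j, f i = f j -> i = j.
Proof. move=> h i j e. case: (ltngtP i j) => // /h; lia. Qed.
Arguments incr_inj {f}.


Lemma stanley_tf As : stanley_set As -> tfP (inr (stanley As)).
Proof.
move=> hA x y z [i <-] [j <-] [l <-] xy yz.
have [tf _] := @stanley_inv _ hA (maxn i (maxn j l)).+1.
move/three_freeP: tf; apply => //; apply/mem_mkseqP; [exists i|exists j|exists l] => //; lia.
Qed.
Arguments stanley_tf {As}.


Lemma stanley_greedy As : stanley_set As -> forall m,
  stanley As (size (sset As)).-1 < m -> ~ inr (stanley As) m ->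
  rejected (inr (stanley As)) m.
Proof.
move=> hA m hm nin.
have inc := @stanley_incr _ hA.
have ex : exists n, m < (stanley As) n by exists m.+1; have := incr_ge inc m.+1; lia.
case: (ex_minnP ex) => n mn minn.
have hs := @sset_pos _ hA.
have hn : size (sset As) <= n.
  case: (leqP (size (sset As)) n) => // hn. have := incr_le inc (_ : n <= (size (sset As)).-1); lia.
have n0 : 0 < n by lia.
have hn1 : (stanley As) n.-1 < m.
  case: (ltngtP ((stanley As) n.-1) m) => // h.
    have := minn _ h; lia.
  by case: nin; exists n.-1.
have [tf _] := @stanley_inv _ hA n.
set p := mkseq (stanley As) n.
have lastp : last 0 p = (stanley As) n.-1.
  rewrite /p; case: n n0 {minn mn hn hn1 tf p} => // n _. by rewrite mkseqS last_rcons.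
have hle : forall x, x \in p -> x <= last 0 p.
  move=> x /mem_mkseqP [i hi <-]. rewrite lastp. apply: incr_le => //; lia.
have [h1 h2 h3] := @next_term_spec _ tf hle.
have nt : ~~ three_free (rcons p m) by apply: h3; rewrite lastp -stanley_big //; apply/andP.
have hlt : forall x, x \in p -> x < m by move=> x hx; have := hle x hx; rewrite lastp; lia.
have [x [y [hx [hy [xm E]]]]] := rej_rcons tf hlt nt.
exists x, y; split; first by case/mem_mkseqP: hx => i _ <-; exists i.
split; first by case/mem_mkseqP: hy => i _ <-; exists i.
by [].
Qed.
Arguments stanley_greedy {As}.


Lemma stanley_char As (T : nat -> nat) : stanley_set As ->
  (forall i j, i < j -> T i < T j) -> tfP (inr T) ->
  (forall i, i < size (sset As) -> T i = nth 0 (sset As) i) ->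
  (forall m, T (size (sset As)).-1 < m -> ~ inr T m -> rejected (inr T) m) ->
  forall n, stanley As n = T n.
Proof.
move=> hA incT tfT hsm hgr. have hs := @sset_pos _ hA.
elim/ltn_ind => n IH.
case: (ltnP n (size (sset As))) => hn; first by rewrite stanley_small // hsm.
have n0 : 0 < n by lia.
rewrite stanley_big //.
have -> : mkseq (stanley As) n = mkseq T n.
  apply/eq_in_map => i; rewrite mem_iota add0n => /andP[_ hi]; exact: IH.
set p := mkseq T n.
have lastp : last 0 p = T n.-1.
  rewrite /p; case: n n0 {IH hn p} => // n _. by rewrite mkseqS last_rcons.
have tfp : three_free p.
  apply: (tf_sub tfT) => x /mem_mkseqP [i _ <-]; by exists i.
have hle : forall x, x \in p -> x <= last 0 p.
  move=> x /mem_mkseqP [i hi <-]. rewrite lastp. apply: incr_le => //; lia.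
have [h1 h2 h3] := @next_term_spec _ tfp hle.
rewrite -/p lastp in h1 h3.
set m0 := next_term p in h1 h2 h3 *.
case: (ltngtP m0 (T n)) => // h.
- exfalso. move: h2; apply/negP. apply: rej_not_tf.
  have nin : ~ inr T m0.
    move=> [i ei]. case: (ltnP i n) => hi.
      have := incr_le incT (_ : i <= n.-1); lia.
    have := incr_le incT hi; lia.
  have := hgr m0 _ nin. case.
    apply: leq_ltn_trans h1; apply: incr_le => //; lia.
  move=> x [y [[i ei] [[j ej] [xm E]]]].
  exists x, y; split; [|split=> //]; apply/mem_mkseqP.
    exists i => //. apply: (incr_lt_inv incT); lia.
  exists j => //. apply: (incr_lt_inv incT); lia.
- exfalso. move: (h3 (T n)). rewrite (incT _ _ (_ : n.-1 < n)) ?h //=; last lia.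
  move=> /(_ isT) /negP; apply.
  apply: (tf_sub tfT) => x; rewrite mem_rcons in_cons.
  case/orP => [/eqP->|/mem_mkseqP[i _ <-]]; by eexists.
Qed.
Arguments stanley_char {As T}.


Lemma wo (P : nat -> Prop) n : P n -> exists m, P m /\ forall j, P j -> m <= j.
Proof.
elim: n {-2}n (leqnn n) => [|n IH] m hm Pm.
  exists m; split => // j _; lia.
case: (classic (exists j, j < m /\ P j)) => [[j [jm Pj]]|nj].
  apply: (IH j) => //; lia.
exists m; split => // j Pj. case: (ltnP j m) => // jm. by case: nj; exists j.
Qed.

Lemma sidx0 j : sidx j 0 = 2 ^ j.
Proof. by rewrite /sidx GRing.subr0. Qed.

Record AF (a : nat -> nat) (P : nat) (lam : int) : Prop := {
  af_inc : forall i j, i < j -> a i < a j;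
  af_tf : tfP (inr a);
  af_0 : a 0 = 0;
  af_P : 0 < P;
  af_1 : forall i, i < P -> a (P + i) = a P + a i;
  af_2 : forall i, i <= P -> a (P.*2 + i) = 3 * a P + a i;
  af_gr : forall m, a P.-1 < m -> ~ inr a m -> rejected (inr a) m;
  af_lam : (Posz (a P) = 2 * Posz (a P.-1) - lam + 1)%R
}.
Arguments af_inc {a P lam}.
Arguments af_tf {a P lam}.
Arguments af_0 {a P lam}.
Arguments af_P {a P lam}.
Arguments af_1 {a P lam}.
Arguments af_2 {a P lam}.
Arguments af_gr {a P lam}.
Arguments af_lam {a P lam}.


Lemma stanley0 As : stanley_set As -> stanley As 0 = 0.
Proof.
move=> hA. have hs := @sset_pos _ hA. rewrite stanley_small //.
have : 0 \in sset As by rewrite mem_sset; case/andP: hA.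
case e: (sset As) => [|x s] //=. rewrite in_cons => /orP[/eqP->//|h0].
have : x <= 0.
  have := sset_sorted As; rewrite e /= => hp.
  have : all (ltn x) s by apply: (order_path_min ltn_trans hp).
  by move/allP/(_ _ h0); rewrite /= ltn0.
lia.
Qed.

Lemma AF_of A k lamA : stanley_set A -> adequate A lamA 0 (stanley A) k ->
  AF (stanley A) (2 ^ k) lamA.
Proof.
move=> hA [hreg hmin]. set a := stanley A.
have inc := @stanley_incr _ hA.
have adq : forall j, k <= j -> (forall i, i < 2^j -> a (2^j + i) = a (2^j) + a i) /\
    (Posz (a (2^j)%N) = 2 * Posz (a (2^j)%N.-1) - lamA + 1)%R.
  move=> j hj; have [h1 h2] := hreg j hj; move: h1 h2; rewrite sidx0 => h1 h2; split => //.
have P0 : 0 < 2 ^ k by rewrite expn_gt0.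
have [e1 e2] := adq k (leqnn k).
have [f1 f2] := adq k.+1 (leqnSn k).
have eS : 2 ^ k.+1 = (2 ^ k).*2 by rewrite expnS mul2n.
have e3 : a (2 ^ k.+1).-1 = a (2^k) + a (2^k).-1.
  rewrite eS -e1; last lia. congr a; lia.
have e4 : a (2 ^ k.+1) = 3 * a (2 ^ k).
  move: f2; rewrite e3 => f2. lia.
constructor.
- exact: inc.
- exact: stanley_tf.
- exact: stanley0.
- exact: P0.
- exact: e1.
- move=> i hi. rewrite -eS f1; last by rewrite eS; lia. by rewrite e4.
-
  pose Q n := exists N, nucleating A N /\ size (undup N) = n.
  have [n0 [[N0 [hN0 sN0]] min0]] : exists m, Q m /\ forall j, Q j -> m <= j.
    apply: (@wo Q (size (undup A))). exists A; split => //; split => //.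
  have mN : min_nucleating A N0.
    split => // N' hN'. rewrite sN0. apply: min0. by exists N'.
  have := hmin N0 mN. rewrite sidx0 => nin.
  case: hN0 => sN eqN.
  have eqf : stanley N0 = a by apply: functional_extensionality => x; rewrite eqN.
  have hsz : size (sset N0) <= 2 ^ k.
    case: (leqP (size (sset N0)) (2^k)) => // hlt.
    move: nin; rewrite -/a -eqf stanley_small // -mem_sset mem_nth //.
  move=> m hm nm. rewrite -eqf. apply: stanley_greedy => //; rewrite ?eqf //.
  apply: leq_ltn_trans hm. apply: incr_le => //. have := @sset_pos _ sN. lia.
- exact: e2.
Qed.

Definition Tf (a c : nat -> nat) (P n : nat) := a P * c (n %/ P) + a (n %% P).

Set Implicit Arguments. Unset Strict Implicit.

Lemma Tf_eq a c P j i : 0 < P -> i < P -> Tf a c P (j * P + i) = a P * c j + a i.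
Proof. move=> P0 iP. by rewrite /Tf divnMDl // divn_small // addn0 modnMDl modn_small. Qed.

Lemma T_in a c P j i : 0 < P -> i < P -> inr (Tf a c P) (a P * c j + a i).
Proof. by move=> P0 iP; exists (j * P + i); rewrite Tf_eq. Qed.

Lemma mullt D x y : 0 < D -> x < y -> D * x + D <= D * y.
Proof. nia. Qed.


Lemma AF_lt a P lam : AF a P lam -> forall i, i < P -> a i < a P.
Proof. move=> h i hi; exact: (af_inc h _ _ hi). Qed.

Lemma AF_D a P lam : AF a P lam -> 0 < a P.
Proof. move=> h. have := af_inc h _ _ (af_P h). by rewrite (af_0 h). Qed.

Lemma T_incr a c P lam : AF a P lam -> (forall i j, i < j -> c i < c j) ->
  forall n n', n < n' -> Tf a c P n < Tf a c P n'.
Proof.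
move=> hA hc n n' nn'. have P0 := af_P hA.
rewrite (divn_eq n P) (divn_eq n' P) !Tf_eq ?ltn_pmod //.
have hq : n %/ P <= n' %/ P by apply: leq_div2r; lia.
move: hq; rewrite leq_eqVlt => /orP[/eqP eq|lt].
- rewrite eq. have : n %% P < n' %% P.
    have e1 := divn_eq n P; have e2 := divn_eq n' P; rewrite eq in e1; lia.
  move/(af_inc hA). lia.
- have := mullt (AF_D hA) (hc _ _ lt). have := AF_lt hA (ltn_pmod n P0). lia.
Qed.

Lemma T_tf a c P lam : AF a P lam -> (forall i j, i < j -> c i < c j) -> tfP (inr c) ->
  tfP (inr (Tf a c P)).
Proof.
move=> hA hc tfc x y z [n1 <-] [n2 <-] [n3 <-].
have P0 := af_P hA. have D0 := AF_D hA.
rewrite (divn_eq n1 P) (divn_eq n2 P) (divn_eq n3 P) !Tf_eq ?ltn_pmod //.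
set D := a P. set s1 := c _. set s2 := c _. set s3 := c _.
set r1 := n1 %% P. set r2 := n2 %% P. set r3 := n3 %% P.
have h1 : r1 < P by apply: ltn_pmod. have h2 : r2 < P by apply: ltn_pmod.
have h3 : r3 < P by apply: ltn_pmod.
have b1 := AF_lt hA h1. have b2 := AF_lt hA h2. have b3 := AF_lt hA h3.
rewrite -/D in b1 b2 b3.
move=> xy yz E.
have tfa := af_tf hA.
have ina : forall i, inr a (a i) by move=> i; exists i.
have inaP : forall i, i < P -> inr a (D + a i) by move=> i hi; exists (P + i); rewrite (af_1 hA).
have E' : D * (s1 + s3) + a r1 + a r3 = D * (2 * s2) + 2 * a r2 by lia.
have u1 : s1 + s3 < 2 * s2 + 2.
  rewrite -(ltn_pmul2l D0). lia.
have u2 : 2 * s2 < s1 + s3 + 2.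
  rewrite -(ltn_pmul2l D0). lia.
have [c0|[c1|c2]] : s1 + s3 = 2 * s2 \/ s1 + s3 = 2 * s2 + 1 \/ 2 * s2 = s1 + s3 + 1 by lia.
- have := congr1 (muln D) c0 => c0'.
  have ea : a r1 + a r3 = (a r2).*2 by lia.
  have ea1 : a r1 = a r3.
    case: (ltngtP (a r1) (a r3)) => // h.
    + exfalso; apply: (tfa (a r1) (a r2) (a r3)) => //; lia.
    + exfalso; apply: (tfa (a r3) (a r2) (a r1)) => //; lia.
  have es : s1 = s3.
    have cc : s1 + s3 = s2.*2 by lia.
    have [i1 e1] : inr c s1 by eexists. have [i2 e2] : inr c s2 by eexists.
    have [i3 e3] : inr c s3 by eexists.
    case: (ltngtP s1 s3) => // h.
    + exfalso; apply: (tfc s1 s2 s3); try (eexists; eassumption); lia.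
    + exfalso; apply: (tfc s3 s2 s1); try (eexists; eassumption); lia.
  subst. lia.
- have := congr1 (muln D) c1 => c1'.
  apply: (tfa (a r1) (a r2) (D + a r3)) => //; try lia. exact: inaP.
- have := congr1 (muln D) c2 => c2'.
  apply: (tfa (a r3) (D + a r2) (D + a r1)) => //; try exact: inaP; lia.
Qed.

Lemma predmul L P : 0 < L -> 0 < P -> (L * P).-1 = L.-1 * P + P.-1.
Proof. case: L => // L _; case: P => // P _. rewrite mulSn /=. lia. Qed.

Lemma AF_dec a P lam : AF a P lam -> forall j, a j < 4 * a P ->
  exists2 i, i < P & (a j = a i \/ a j = a P + a i \/ a j = 3 * a P + a i).
Proof.
move=> hA j hj. have P0 := af_P hA. have inc := af_inc hA.
have h3 : a (P.*2 + P) = 4 * a P by rewrite (af_2 hA) //; lia.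
have jlt : j < P.*2 + P by apply: (incr_lt_inv inc); lia.
case: (ltnP j P) => h1; first by exists j => //; left.
case: (ltnP j P.*2) => h2.
  exists (j - P); first lia. right; left. rewrite -(af_1 hA); last lia. congr a; lia.
exists (j - P.*2); first lia. right; right. rewrite -(af_2 hA); last lia. congr a; lia.
Qed.

Lemma T_greedy a P lam Bs : AF a P lam -> stanley_set Bs ->
  forall m, Tf a (stanley Bs) P ((size (sset Bs)) * P).-1 < m ->
  ~ inr (Tf a (stanley Bs) P) m -> rejected (inr (Tf a (stanley Bs) P)) m.
Proof.
move=> hA hB m hm nin.
have P0 := af_P hA. have D0 := AF_D hA.
have L0 := sset_pos hB.
have incc := stanley_incr hB.
have grc := stanley_greedy hB.
have inca := af_inc hA.
move: hm nin grc. set c := stanley Bs. set L := size (sset Bs). set D := a P.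
move=> hm nin grc.
set mB := c L.-1.
have hT : Tf a c P (L * P).-1 = D * mB + a P.-1.
  rewrite predmul // Tf_eq //; lia.
rewrite hT in hm.
have bA : forall i, i < P -> a i < D by move=> i hi; apply: inca.
have aPm1 : a P.-1 < D by apply: bA; lia.
have ale : forall i, i < P -> a i <= a P.-1 by move=> i hi; apply: (incr_le inca); lia.
set q := m %/ D. set r := m %% D.
have em : m = D * q + r by rewrite /q /r mulnC -divn_eq.
have rD : r < D by apply: ltn_pmod.
have pair : forall z1 z2 i1 i2, inr c z1 -> inr c z2 -> i1 < P -> i2 < P ->
    D * z1 + a i1 < m -> D * z1 + a i1 + m = (D * z2 + a i2).*2 ->
    rejected (inr (Tf a c P)) m.
  move=> z1 z2 i1 i2 [j1 <-] [j2 <-] h1 h2 lt E.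
  exists (D * c j1 + a i1), (D * c j2 + a i2); do !split => //; exact: T_in.
have hq : mB <= q.
  case: (leqP mB q) => // h. exfalso. have := mullt D0 h. lia.
have mB_in : inr c mB by exists L.-1.
have alpha : forall i1 i2, i1 < P -> i2 < P -> a i1 < r -> a i1 + r = (a i2).*2 ->
    rejected (inr (Tf a c P)) m.
  move=> i1 i2 h1 h2 lt E.
  case: (classic (inr c q)) => hcq.
    apply: (pair q q i1 i2) => //; lia.
  have hq' : mB < q.
    case: (ltngtP mB q) => // e; [lia|by rewrite -e in hcq].
  have [z1 [z2 [hz1 [hz2 [zq Ez]]]]] := grc q hq' hcq.
  apply: (pair z1 z2 i1 i2) => //.
    have := mullt D0 zq. have := bA _ h1. lia.
  have := congr1 (muln D) Ez. lia.
have beta : forall i1 i2, i1 < P -> i2 < P -> a i1 + r + D = (a i2).*2 -> mB < q ->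
    rejected (inr (Tf a c P)) m.
  move=> i1 i2 h1 h2 E hq'.
  have eq1 : q = q.-1.+1 by lia.
  have eDq : D * q = D * q.-1 + D by rewrite {1}eq1 mulnS; lia.
  case: (classic (inr c q.-1)) => hcq.
    apply: (pair q.-1 q.-1 i1 i2) => //; have := bA _ h1; lia.
  have hq1 : mB < q.-1.
    case: (ltngtP mB q.-1) => // e; [lia|by rewrite -e in hcq].
  have [z1 [z2 [hz1 [hz2 [zq Ez]]]]] := grc q.-1 hq1 hcq.
  apply: (pair z1 z2 i1 i2) => //.
    have := mullt D0 zq. have := bA _ h1. lia.
  have := congr1 (muln D) Ez. lia.
case: (classic (exists2 i, i < P & a i = r)) => [[i0 hi0 er]|nr].
- have hcq : ~ inr c q.
    move=> [j ej]; apply: nin. exists (j * P + i0). rewrite Tf_eq // ej er. lia.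
  have hq' : mB < q.
    case: (ltngtP mB q) => // e; [lia|by rewrite -e in hcq].
  have [z1 [z2 [hz1 [hz2 [zq Ez]]]]] := grc q hq' hcq.
  apply: (pair z1 z2 i0 i0) => //.
    have := mullt D0 zq. lia.
  have := congr1 (muln D) Ez. lia.
- have hra : ~ inr a r.
    move=> [j ej]. apply: nr; exists j => //. apply: (incr_lt_inv inca). rewrite -/D; lia.
  case: (ltngtP (a P.-1) r) => hr.
  + have [x [y [[j1 e1] [[j2 e2] [xr E]]]]] := af_gr hA r hr hra.
    have j1P : j1 < P by apply: (incr_lt_inv inca); rewrite -/D; lia.
    have j2P : j2 < P by apply: (incr_lt_inv inca); rewrite -/D; lia.
    apply: (alpha j1 j2) => //; lia.
  + have hq' : mB < q.
      case: (ltngtP mB q) => // e; first lia. rewrite -e in em. lia.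
    have h3r : a P.-1 < 3 * D + r by lia.
    have a2P : a P.*2 = 3 * D by rewrite -[P.*2]addn0 (af_2 hA) // (af_0 hA) addn0.
    have a3P : a (P.*2 + P) = 4 * D by rewrite (af_2 hA) //; lia.
    have hn3 : ~ inr a (3 * D + r).
      move=> [j ej].
      case: (ltnP j P.*2) => hj1.
        have := inca _ _ hj1; lia.
      case: (ltnP j (P.*2 + P)) => hj2.
        apply: nr. exists (j - P.*2); first lia.
        have : a (P.*2 + (j - P.*2)) = 3 * D + a (j - P.*2) by rewrite (af_2 hA) //; lia.
        have -> : P.*2 + (j - P.*2) = j by lia. lia.
      have := incr_le inca hj2. lia.
    have [x [y [[j1 e1] [[j2 e2] [xr E]]]]] := af_gr hA _ h3r hn3.
    have [i1 hi1 d1] := AF_dec hA (j:=j1) (ltac:(lia)).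
    have [i2 hi2 d2] := AF_dec hA (j:=j2) (ltac:(lia)).
    have b1 := bA _ hi1. have b2 := bA _ hi2.
    rewrite -/D in d1 d2.
    case: d1 => [d1|[d1|d1]]; case: d2 => [d2|[d2|d2]]; try (exfalso; lia).
    * apply: (beta i1 i2) => //; lia.
    * apply: (alpha i1 i2) => //; lia.
  + exfalso; apply: nr. exists P.-1; [lia|done].
Qed.

Lemma mkseq_sorted (T : nat -> nat) n : (forall i j, i < j -> T i < T j) -> sorted ltn (mkseq T n).
Proof. move=> h. apply: homo_sorted; first exact: h. exact: iota_ltn_sorted. Qed.

Lemma mem_sset_stanley Bs b : stanley_set Bs ->
  (b \in Bs) <-> exists2 j, j < size (sset Bs) & stanley Bs j = b.
Proof.
move=> hB; rewrite -mem_sset; split.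
  move=> hb. exists (index b (sset Bs)); first by rewrite index_mem.
  by rewrite stanley_small ?index_mem // nth_index.
move=> [j hj <-]. by rewrite stanley_small // mem_nth.
Qed.

Lemma T_stanley a P lam Bs : AF a P lam -> stanley_set Bs ->
  let Cs := [seq (a P * b + x) | x <- [seq a i | i <- iota 0 P], b <- Bs] in
  stanley_set Cs /\ stanley Cs = Tf a (stanley Bs) P.
Proof.
move=> hA hB Cs.
have P0 := af_P hA. have L0 := sset_pos hB.
have incT := T_incr hA (stanley_incr hB).
set T := Tf a (stanley Bs) P in incT *.
set L := size (sset Bs) in L0.
have memC : forall x, (x \in Cs) <-> exists2 n, n < L * P & T n = x.
  move=> x; split.
    move/allpairsP => [[x1 b] /= [hx1 hb ->]].
    case/mapP: hx1 => i; rewrite mem_iota add0n => /andP[_ hi] ->.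
    case/(mem_sset_stanley _ hB): hb => j hj <-.
    exists (j * P + i); last by rewrite /T Tf_eq.
    have := mullt P0 hj. rewrite -/L. nia.
  move=> [n hn <-]. apply/allpairsP.
  exists (a (n %% P), stanley Bs (n %/ P)); split => /=.
  - apply/mapP; exists (n %% P) => //; rewrite mem_iota add0n ltn_pmod //.
  - apply/(mem_sset_stanley _ hB); exists (n %/ P) => //. by rewrite ltn_divLR.
  - by rewrite /T /Tf.
have eqs : sset Cs = mkseq T (L * P).
  apply: (irr_sorted_eq ltn_trans ltnn (sset_sorted Cs) (mkseq_sorted _ incT)).
  move=> x; rewrite mem_sset. apply/idP/idP.
    by move/memC => [n hn <-]; apply/mem_mkseqP; exists n.
  by move/mem_mkseqP => [n hn <-]; apply/memC; exists n.
have tfT : tfP (inr T) := T_tf hA (stanley_incr hB) (stanley_tf hB).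
have hC : stanley_set Cs.
  apply/andP; split.
    apply: (tf_sub tfT) => x /memC [n _ <-]; by exists n.
  apply/memC. exists 0; first by rewrite muln_gt0 L0 P0.
  rewrite /T /Tf div0n mod0n (af_0 hA) addn0.
  have : stanley Bs 0 = 0 by apply: stanley0.
  by move=> ->; rewrite muln0.
split => //.
apply: functional_extensionality; apply: (stanley_char hC incT tfT).
- move=> i; rewrite eqs size_mkseq => hi. by rewrite nth_mkseq.
  rewrite eqs size_mkseq. exact: (T_greedy hA hB).
Qed.

Lemma Tf_split a c P i : 0 < P -> Tf a c P i = a P * c (i %/ P) + a (i %% P).
Proof. by []. Qed.

Lemma indep_T a P lam c k lc : AF a P lam -> P = 2 ^ k -> independent_with c lc ->
  independent_with (Tf a c P) (Posz (a P) * lc + lam)%R.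
Proof.
move=> hA eP [K hK]. have P0 := af_P hA.
exists (K + k) => Kx hKx.
have eKx : 2 ^ Kx = 2 ^ (Kx - k) * P by rewrite eP -expnD; congr (2 ^ _); lia.
have [h1 h2] := hK (Kx - k) (ltac:(lia)).
set X := 2 ^ (Kx - k) in eKx h1 h2.
have X0 : 0 < X by rewrite expn_gt0.
split.
- move=> i hi. rewrite eKx.
  have ej := divn_eq i P. have hj : i %/ P < X by rewrite ltn_divLR // -eKx.
  have hr := ltn_pmod i P0.
  rewrite {1}ej addnA -mulnDl Tf_eq // h1 //.
  rewrite -[X * P]addn0 Tf_eq // (af_0 hA) /Tf. lia.
- rewrite eKx predmul // -[X * P]addn0 !Tf_eq //; last lia.
  have hl := af_lam hA. rewrite (af_0 hA) addn0.
  rewrite !PoszD !PoszM. move: h2 hl. set u := Posz (c X). set v := Posz (c X.-1).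
  move=> h2 hl. rewrite h2. lia.
Qed.

Lemma sidxM k K s : sidx (K + k) (Posz (2 ^ k) * s)%R = sidx K s * 2 ^ k.
Proof.
rewrite /sidx expnD PoszM [(Posz (2 ^ k) * s)%R]mulrC -mulrBl abszM. by [].
Qed.

Lemma regeqs_T a P lam b lb sb cb k K : AF a P lam -> P = 2 ^ k ->
  0 < sidx K sb -> regular_eqs b lb sb cb K ->
  regular_eqs (Tf a b P) (Posz (a P) * lb + lam)%R (Posz P * sb)%R (Tf a cb P) (K + k).
Proof.
move=> hA eP u0 [h1 h2]. have P0 := af_P hA.
have eK : 2 ^ (K + k) = 2 ^ K * P by rewrite eP expnD.
rewrite /regular_eqs eP sidxM -eP.
set u := sidx K sb in u0 h1 h2 *.
have X0 : 0 < 2 ^ K by rewrite expn_gt0.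
split.
- move=> i hi. rewrite eK in hi.
  have ej := divn_eq i P. have hj : i %/ P < 2 ^ K by rewrite ltn_divLR.
  have hr := ltn_pmod i P0.
  rewrite {1}ej addnA -mulnDl Tf_eq // h1 //.
  rewrite -[u * P]addn0 Tf_eq // (af_0 hA) /Tf. lia.
- rewrite predmul // -[u * P]addn0 !Tf_eq //; last lia.
  have hl := af_lam hA. rewrite (af_0 hA) addn0.
  rewrite !PoszD !PoszM. move: h2 hl. set w := Posz (b u). set v := Posz (b u.-1).
  move=> h2 hl. rewrite h2. lia.
Qed.

Lemma indep_T_inv a P lam c k : AF a P lam -> P = 2 ^ k ->
  independent (Tf a c P) -> independent c.
Proof.
move=> hA eP [lt [K hK]]. have P0 := af_P hA. have D0 := AF_D hA.
have key : forall K'', K <= K'' ->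
   (forall j, j < 2 ^ K'' -> c (2 ^ K'' + j) = c (2 ^ K'') + c j) /\
   (Posz (a P) * Posz (c (2 ^ K'')%N) = Posz (a P) * (2 * Posz (c (2 ^ K'')%N.-1))
        + 2 * Posz (a P.-1) - lt + 1)%R.
  move=> K'' hK''.
  have eKx : 2 ^ (K'' + k) = 2 ^ K'' * P by rewrite eP expnD.
  have X0 : 0 < 2 ^ K'' by rewrite expn_gt0.
  have [h1 h2] := hK (K'' + k) (ltac:(lia)).
  rewrite eKx in h1 h2. split.
  - move=> j hj. have := h1 (j * P) (ltac:(nia)).
    rewrite -mulnDl -[(2 ^ K'' + j) * P]addn0 -[2 ^ K'' * P]addn0 -[j * P]addn0 !Tf_eq //.
    rewrite (af_0 hA) !addn0 -mulnDr => /eqP. rewrite eqn_pmul2l // => /eqP //.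
  - move: h2. rewrite predmul // -[2 ^ K'' * P]addn0 !Tf_eq //; last lia.
    rewrite (af_0 hA) addn0 !PoszD !PoszM. lia.
exists (2 * Posz (c (2 ^ K)%N.-1) + 1 - Posz (c (2 ^ K)%N))%R, K => K'' hK''.
have [h1 h2] := key K'' hK''. split => //.
have [_ h3] := key K (leqnn K).
have E : (Posz (a P) * (Posz (c (2 ^ K'')%N) - 2 * Posz (c (2 ^ K'')%N.-1)) =
          Posz (a P) * (Posz (c (2 ^ K)%N) - 2 * Posz (c (2 ^ K)%N.-1)))%R by lia.
have /mulfI : (Posz (a P) != 0)%R by rewrite eqz_nat; lia.
move/(_ _ _ E). lia.
Qed.

Lemma sidx_pos K s : (`|s| < 2 ^ K)%N -> 0 < sidx K s.
Proof.
move=> h. rewrite /sidx absz_gt0 subr_eq0. apply/eqP => e.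
move: h; rewrite -e absz_nat ltnn //.
Qed.

Unset Implicit Arguments.
Local Open Scope ring_scope.

Theorem theorem2 (A B : seq nat) (k : nat) (lamA lamB sigmaB : int)
    (coreB : nat -> nat) :
  stanley_set A -> stanley_set B ->
  independent_with (stanley A) lamA ->
  regular_with (stanley B) lamB sigmaB coreB ->
  adequate A lamA 0 (stanley A) k ->
  let C := otimes A k B in
  [/\ stanley_set C,
      exists coreC, regular_with (stanley C)
                      ((stanley A (2 ^ k)%N)%:Z * lamB + lamA)
                      ((2 ^ k)%N%:Z * sigmaB) coreC,
      (independent (stanley C) <-> independent (stanley B)) &
      forall n : nat, (exists m, stanley C m = n) <->
        (exists2 x, x \in Astar A k & exists j, n = (stanley A (2 ^ k) * stanley B j + x)%N)].
Proof.
move=> hA hB _ hregB hadq C.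
have hAF := @AF_of _ _ _ hA hadq.
have P0 := af_P hAF.
have [hC eqC] : stanley_set C /\ stanley C = Tf (stanley A) (stanley B) (2 ^ k) :=
  T_stanley hAF hB.
split => //.
- case: hregB => [[CB [hCB eqcore indcore]] [K0 hK0]].
  have ecore : coreB = stanley CB by apply: functional_extensionality.
  subst coreB.
  have [hCC eqCC] : stanley_set (otimes A k CB) /\
      stanley (otimes A k CB) = Tf (stanley A) (stanley CB) (2 ^ k) := T_stanley hAF hCB.
  exists (stanley (otimes A k CB)). rewrite eqC eqCC. split.
    exists (otimes A k CB); split => //; first by rewrite eqCC.
    exact: indep_T.
  exists (K0 + `|sigmaB| + k)%N => Kx hKx.
  have -> : Kx = (Kx - k + k)%N by lia.
  apply: regeqs_T => //.
    apply: sidx_pos. apply: (leq_ltn_trans _ (ltn_expl (Kx - k) (isT : (1 < 2)%N))). lia.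
  apply: hK0; lia.
- split.
    rewrite eqC => h; exact: (indep_T_inv hAF (erefl _) h).
  move=> [lc hlc]. rewrite eqC. exists (Posz (stanley A (2 ^ k)) * lc + lamA).
  exact: indep_T.
- move=> n. rewrite eqC. split.
  + move=> [m <-]. exists (stanley A (m %% 2 ^ k)%N).
      apply/mapP; exists (m %% 2 ^ k)%N => //. by rewrite mem_iota add0n ltn_pmod.
    by exists (m %/ 2 ^ k)%N.
  + move=> [x /mapP [i]]. rewrite mem_iota add0n => /andP[_ hi] -> [j ->].
    exists (j * 2 ^ k + i)%N. by rewrite Tf_eq.
Qed.
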